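(* For every integer $m$ with $3\leq m\leq 6$ we have $d_m\geq \frac{1}{m+2}$, and for every integer $m\geq 7$ we have $d_m\geq\frac18$.
   Context: For a positive integer $m$, a subset $A$ of an abelian group is $m$-sum-free if there is no triple $(x,y,z)\in A^3$ with $x+y=mz$. For a prime $p$, $d_m(\mathbb{Z}/p\mathbb{Z})=\max\{|A|/p : A\subseteq \mathbb{Z}/p\mathbb{Z}\ \text{is } m\text{-sum-free}\}$. For $m\ge 3$ it is known (from prior work) that $d_m(\mathbb{Z}/p\mathbb{Z})$ converges as $p\to\infty$ through primes; $d_m$ denotes this limit. *)

(* Defs.v *)
From HB Require Import structures.
From mathcomp Require Import all_boot all_order all_algebra.
From Stdlib Require Import Reals.

Set Implicit Arguments. Unset Strict Implicit. Unset Printing Implicit Defensive.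

Definition msumfree (G : finZmodType) (m : nat) (A : {set G}) : bool :=
  [forall x in A, forall y in A, forall z in A, GRing.add x y != GRing.natmul z m].

Definition dmp (m p : nat) : R :=
  Rdiv (INR (\max_(A : {set 'Z_p} | msumfree m A) #|A|)) (INR p).

Definition dm_limit (m : nat) (L : R) : Prop :=
  forall eps : R, Rlt 0 eps ->
    exists N : nat, forall p : nat, prime p -> (N <= p)%N ->
      Rlt (Rabs (Rminus (dmp m p) L)) eps.

(* Main.v *)
Require Import Defs.
From mathcomp Require Import all_boot all_order all_algebra.
From Stdlib Require Import Reals.
From mathcomp Require Import zify.
From Stdlib Require Import Lra.


Lemma msumfree_nat (q m : nat) (P : nat -> bool) :
  (forall x y z, x < q.+2 -> y < q.+2 -> z < q.+2 -> P x -> P y -> P z ->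
     (x + y) %% q.+2 != (z * m) %% q.+2) ->
  msumfree m [set x : 'I_q.+2 | P (val x)].
Proof.
move=> H; apply/forallP => x; apply/implyP; rewrite inE => Px.
apply/forallP => y; apply/implyP; rewrite inE => Py.
apply/forallP => z; apply/implyP; rewrite inE => Pz.
apply/negP => /eqP /(congr1 val) /=.
rewrite Zp_mulrn /=.
move=> E; move: (H x y z (ltn_ord x) (ltn_ord y) (ltn_ord z) Px Py Pz).
by rewrite E eqxx.
Qed.

Lemma card_nat (q : nat) (P : nat -> bool) :
  #|[set x : 'I_q | P (val x)]| = \sum_(0 <= i < q) P i.
Proof.
rewrite -sum1dep_card big_mkord big_mkcond /=.
by apply: eq_bigr => i _; case: (P i).
Qed.
Lemma count_int (D a b n : nat) :
  D * (\sum_(0 <= i < n) (a <= D * i < b)) + D >= minn b (D * n) - a.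
Proof.
elim: n => [|n IH]; first by rewrite muln0 minn0.
rewrite big_nat_recr //= mulnDr mulnS.
case: (leqP a (D * n)) => Ha; case: (ltnP (D * n) b) => Hb /=; lia.
Qed.

Section Bohr.
Variables n p : nat.
Definition DD := 4 * (n + 2) * n.
Definition Ip z := (2 * (n + 2) * p < DD * z) && (DD * z < 2 * (n + 2) * p + (n + 2) * n * p).
Definition Bk k z := ((2 * (n + 2) + 4 * n * k) * p <= DD * z) &&
                     (DD * z < (2 * (n + 2) + 4 * n * k + 2 * n) * p).
Definition PP N z := Ip z && has (fun k => Bk k z) (iota 0 N).
Definition SS N := \sum_(0 <= i < p) PP N i.

Lemma Bk_disj {k N i} : k < N -> Bk k i -> Bk N i -> False.
Proof.
move=> kN /andP[_ h1] /andP[h2 _].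
have H := leq_mul (leq_mul (leqnn (4 * n)) kN) (leqnn p).
lia.
Qed.

Lemma SS_step N : SS N.+1 = SS N + \sum_(0 <= i < p) (Ip i && Bk N i).
Proof.
rewrite /SS -big_split /=; apply: eq_bigr => i _.
rewrite /PP -addn1 iotaD has_cat /= orbF add0n.
case: (Ip i) => //=.
case hB: (Bk N i); case hH: (has (Bk^~ i) (iota 0 N)) => //=.
move/hasP: hH => [k]; rewrite mem_iota add0n => /andP[_ kN] hk.
by case: (Bk_disj kN hk hB).
Qed.
Lemma block k : 0 < n ->
  DD * (\sum_(0 <= i < p) (Ip i && Bk k i)) + DD >=
  minn (2 * (n + 2) * p + (n + 2) * n * p) ((2 * (n + 2) + 4 * n * k + 2 * n) * p)
   - ((2 * (n + 2) + 4 * n * k) * p + 1).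
Proof.
move=> n0.
set a := maxn (2 * (n + 2) * p).+1 ((2 * (n + 2) + 4 * n * k) * p).
set b := minn (2 * (n + 2) * p + (n + 2) * n * p) ((2 * (n + 2) + 4 * n * k + 2 * n) * p).
have -> : \sum_(0 <= i < p) (Ip i && Bk k i) = \sum_(0 <= i < p) (a <= DD * i < b).
  apply: eq_bigr => i _; rewrite /Ip /Bk /a /b geq_max leq_min.
  rewrite -!andbA; by case: (2 * (n + 2) * p < DD * i); case: (DD * i < 2 * (n + 2) * p + (n + 2) * n * p); case: ((2 * (n + 2) + 4 * n * k) * p <= DD * i).
have H := count_int DD a b p.
have Hb : b <= DD * p.
  have h1 : 2 * (n + 2) + (n + 2) * n <= DD by rewrite /DD; nia.
  rewrite /b; apply: leq_trans (geq_minl _ _) _.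
  by have := leq_mul h1 (leqnn p); rewrite mulnDl.
have Ha : a <= (2 * (n + 2) + 4 * n * k) * p + 1.
  by rewrite /a geq_max addn1 ltnS leqnSn andbT leq_mul2r leq_addr orbT.
have Hm : minn b (DD * p) = b by apply/minn_idPl.
rewrite Hm in H; lia.
Qed.
Lemma full N : 0 < n -> 4 * N <= n + 2 ->
  DD * SS N + N * (DD + 1) >= N * (2 * n * p).
Proof.
move=> n0; elim: N => [|N IH] HN; first by rewrite !mul0n.
have IH' := IH (leq_trans (leq_mul (leqnn 4) (leqnSn N)) HN).
have Hb := block N n0.
have Hle : (4 * N + 2) * (n * p) <= (n + 2) * (n * p).
  apply: leq_mul (leqnn _); lia.
rewrite SS_step; lia.
Qed.

Lemma total : 0 < n ->
  8 * (DD * SS ((n + 2) %/ 4).+1 + ((n + 2) %/ 4).+1 * (DD + 1)) >= DD * p.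
Proof.
move=> n0.
set q := (n + 2) %/ 4.
have Hq : n + 2 = 4 * q + (n + 2) %% 4 by rewrite /q (divn_eq (n + 2) 4); lia.
have Hr : (n + 2) %% 4 < 4 by rewrite ltn_mod.
move: Hq Hr; set r := (n + 2) %% 4 => Hq Hr.
have Hf := full q n0 (ltac:(lia)).
have Hb := block q n0.
have E : (n + 2) * (n * p) = (4 * q + r) * (n * p) by rewrite Hq.
rewrite SS_step /DD.
rewrite /DD in Hf Hb.
case: r Hq Hr E => [|[|[|[|r]]]] //= Hq _ E; lia.
Qed.
Lemma sf_bohr N x y z : PP N x -> PP N y -> PP N z ->
  (x + y) %% p != (z * (n + 2)) %% p.
Proof.
rewrite /PP /Ip /DD => /andP[/andP[x1 x2] _] /andP[/andP[y1 y2] _].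
move=> /andP[_ /hasP[k _]]; rewrite /Bk /DD => /andP[z1 z2].
apply/negP => /eqP Em.
have e1 := divn_eq (x + y) p; have e2 := divn_eq (z * (n + 2)) p.
move: e1 e2; rewrite Em.
move: ((x + y) %/ p) ((z * (n + 2)) %/ p) => q1 q2 e1 e2.
case: (leqP q2 (q1 + k)) => hq.
- have H1 : z * (n + 2) <= x + y + k * p.
    have : q2 * p <= (q1 + k) * p by rewrite leq_mul2r hq orbT.
    lia.
  have H2 := leq_mul (leqnn (4 * (n + 2) * n)) H1.
  have H3 := leq_mul z1 (leqnn (n + 2)).
  lia.
- have H1 : z * (n + 2) >= x + y + (k + 1) * p.
    have : (q1 + k + 1) * p <= q2 * p by rewrite leq_mul2r addn1 hq orbT.
    lia.
  have H2 := leq_mul (leqnn (4 * (n + 2) * n)) H1.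
  have H3 := leq_mul z2 (leqnn (n + 2)).
  lia.
Qed.
End Bohr.

Lemma sf_interval (m p x y z : nat) : 3 <= m ->
  2 * p <= (m - 2) * (m + 2) * x < m * p ->
  2 * p <= (m - 2) * (m + 2) * y < m * p ->
  2 * p <= (m - 2) * (m + 2) * z < m * p ->
  (x + y) %% p != (z * m) %% p.
Proof.
move=> m3 /andP[x1 x2] /andP[y1 y2] /andP[z1 z2]; apply/negP => /eqP Em.
have e1 := divn_eq (x + y) p; have e2 := divn_eq (z * m) p.
move: e1 e2; rewrite Em.
move: ((x + y) %/ p) ((z * m) %/ p) => q1 q2 e1 e2.
move: x1 x2 y1 y2 z1 z2; set E := (m - 2) * (m + 2) => x1 x2 y1 y2 z1 z2.
have HE : E + 4 = m * m.
  rewrite /E; have [k ->] : exists k, m = k.+2 by exists (m - 2); lia.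
  rewrite !subSS subn0; nia.
case: (leqP q2 q1) => hq.
- have H1 : z * m <= x + y.
    have : q2 * p <= q1 * p by rewrite leq_mul2r hq orbT.
    lia.
  have H2 := leq_mul (leqnn E) H1.
  rewrite mulnDr mulnA in H2.
  have H3 := leq_mul z1 (leqnn m).
  lia.
- have H1 : z * m >= x + y + p.
    have : (q1 + 1) * p <= q2 * p by rewrite leq_mul2r addn1 hq orbT.
    lia.
  have H2 := leq_mul (leqnn E) H1.
  rewrite !mulnDr mulnA in H2.
  have H3 := leq_mul z2 (leqnn m).
  have H4 : E * p + 4 * p = m * m * p by rewrite -mulnDl HE.
  lia.
Qed.

Lemma lim_lower (m : nat) (c K : R) (L : R) :
  (forall p, prime p -> (c - K / INR p <= dmp m p)%R) -> dm_limit m L -> (c <= L)%R.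
Proof.
move=> Hlow Hlim.
destruct (Rle_or_lt c L) as [h|h]; first exact h.
set eps := ((c - L) / 2)%R.
have he : (0 < eps)%R by rewrite /eps; lra.
have [N HN] := Hlim eps he.
have [M HM] := INR_unbounded (K / eps).
have [p Hp1 Hp2] := prime_above (maxn N M).
have HNp : (N <= p)%N by apply: leq_trans (leq_maxl N M) (ltnW Hp1).
have HMp : (INR M < INR p)%R.
  apply: lt_INR; apply/ltP; exact: leq_ltn_trans (leq_maxr N M) Hp1.
have Pp : (0 < INR p)%R.
  apply: (Rle_lt_trans _ (INR M)); [exact: pos_INR | exact HMp].
have H1 := HN p Hp2 HNp.
have [H2 H3] := Rabs_def2 _ _ H1.
have H4 := Hlow p Hp2.
have HK : (K / INR p < eps)%R.
  have : (K / eps < INR p)%R by lra.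
  move=> h'.
  apply (Rmult_lt_reg_r (INR p)); first exact Pp.
  have -> : (K / INR p * INR p = K)%R by field; lra.
  have h2 := Rmult_lt_compat_r eps _ _ he h'.
  replace (K / eps * eps)%R with K in h2 by (field; lra).
  lra.
have heps : (eps * 2 = c - L)%R by rewrite /eps; field.
lra.
Qed.

Lemma frac_bound (c K S P : R) : (0 < P)%R -> (c * P - K <= S)%R -> (c - K / P <= S / P)%R.
Proof.
move=> hP h.
have -> : (c - K / P = (c * P - K) / P)%R by field; lra.
apply Rmult_le_compat_r; last exact h.
left; apply Rinv_0_lt_compat; exact hP.
Qed.

Lemma dmp_ge (m p : nat) (P : nat -> bool) : prime p ->
  (forall x y z, (x < p)%N -> (y < p)%N -> (z < p)%N -> P x -> P y -> P z ->
     (x + y) %% p != (z * m) %% p) ->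
  (INR (\sum_(0 <= i < p) P i) / INR p <= dmp m p)%R.
Proof.
move=> pr H.
have p1 : (1 < p)%N by apply: prime_gt1.
have Hc := Zp_cast p1.
rewrite /dmp; apply: Rmult_le_compat_r.
  left; apply: Rinv_0_lt_compat; apply: lt_0_INR; apply/ltP; lia.
apply: le_INR; apply/leP.
have Hsf : msumfree m [set x : 'I_(Zp_trunc p).+2 | P (val x)].
  apply: msumfree_nat; rewrite Hc; exact: H.
have := leq_bigmax_cond (F := fun A : {set 'Z_p} => #|A|) _ Hsf.
have e : \sum_(0 <= i < (Zp_trunc p).+2) P i = \sum_(0 <= i < p) P i by rewrite Hc.
by rewrite card_nat e.
Qed.

Theorem theorem1p7 :
  (forall (m : nat) (L : R), (3 <= m)%N -> (m <= 6)%N -> dm_limit m L ->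
     Rle (Rinv (INR (m + 2))) L) /\
  (forall (m : nat) (L : R), (7 <= m)%N -> dm_limit m L ->
     Rle (Rinv 8) L).
Proof.
split.
- move=> m L m3 m6 Hl.
  apply: (lim_lower m _ 1%R L _ Hl) => p pr.
  set P := fun z => (2 * p <= (m - 2) * (m + 2) * z < m * p).
  apply: Rle_trans (dmp_ge m p P pr _); last first.
    move=> x y z _ _ _; exact: sf_interval.
  set S := \sum_(0 <= i < p) P i.
  have hp : (0 < INR p)%R by apply: lt_0_INR; apply/ltP; exact: prime_gt0.
  apply: frac_bound => //.
  have H := count_int ((m - 2) * (m + 2)) (2 * p) (m * p) p.
  have Hmin : minn (m * p) ((m - 2) * (m + 2) * p) = m * p.
    apply/minn_idPl; apply: leq_mul (leqnn p); nia.
  rewrite Hmin -/S in H.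
  have H2 : (p <= (m + 2) * (S + 1))%N.
    have H3 : ((m - 2) * p <= (m - 2) * ((m + 2) * (S + 1)))%N.
      have -> : (m - 2) * ((m + 2) * (S + 1)) = (m - 2) * (m + 2) * S + (m - 2) * (m + 2)
        by rewrite mulnA mulnDr muln1.
      have -> : (m - 2) * p = m * p - 2 * p by rewrite mulnBl.
      exact: H.
    by rewrite leq_mul2l in H3; case/orP: H3 => // /eqP; lia.
  have H4 := le_INR _ _ (leP H2).
  rewrite mult_INR (plus_INR S 1) /= in H4.
  have hm : (0 < INR (m + 2))%R by apply: lt_0_INR; apply/ltP; lia.
  apply (Rmult_le_reg_l (INR (m + 2))) => //.
  have -> : (INR (m + 2) * (/ INR (m + 2) * INR p - 1) = INR p - INR (m + 2))%R by field; lra.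
  lra.
- move=> m L m7 Hl.
  set n := m - 2.
  have Hm : m = n + 2 by rewrite /n; lia.
  have n0 : (0 < n)%N by rewrite /n; lia.
  set N := ((n + 2) %/ 4).+1.
  set C := N * (DD n + 1).
  have hD : (0 < INR (DD n))%R by apply: lt_0_INR; apply/ltP; rewrite /DD; nia.
  apply: (lim_lower m _ (INR C / INR (DD n))%R L _ Hl) => p pr.
  apply: Rle_trans (dmp_ge m p (PP n p N) pr _); last first.
    move=> x y z _ _ _; rewrite Hm; exact: sf_bohr.
  have hp : (0 < INR p)%R by apply: lt_0_INR; apply/ltP; exact: prime_gt0.
  apply: frac_bound => //.
  have H : (DD n * p <= 8 * (DD n * SS n p N + C))%N := total n p n0.
  have H4 := le_INR _ _ (leP H).
  rewrite (mult_INR (DD n) p) (mult_INR 8) (plus_INR (DD n * _) C) (mult_INR (DD n)) in H4.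
  have e8 : INR 8 = 8%R by simpl; lra.
  rewrite e8 /SS in H4.
  apply (Rmult_le_reg_l (8 * INR (DD n))); first lra.
  have -> : (8 * INR (DD n) * (/ 8 * INR p - INR C / INR (DD n)) = INR (DD n) * INR p - 8 * INR C)%R
    by field; lra.
  lra.
Qed.
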